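(* Let $T$ be a binary phylogenetic tree with $n$ leaves. Then $\Phi(T)$ is minimum among all binary phylogenetic trees with $n$ leaves if and only if $T$ is maximally balanced.
   Context: A phylogenetic tree with $n$ leaves is a rooted tree whose leaves are bijectively labeled by $\{1,\dots,n\}$; binary means every internal node has exactly two children. $\kappa_T(v)$ is the number of leaves descending from node $v$. An internal node $v$ with children $v_1,v_2$ is balanced if $|\kappa_T(v_1)-\kappa_T(v_2)|\le 1$; $T$ is maximally balanced if all its internal nodes are balanced. The depth $\delta_T(v)$ is the number of arcs from the root to $v$; for leaves $i,j$, $\varphi_T(i,j)=\delta_T(LCA_T(i,j))$ ($LCA$ = lowest common ancestor), and $\Phi(T)=\sum_{1\le i<j\le n}\varphi_T(i,j)$. *)

(* Defs.v *)
From mathcomp Require Import all_boot.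
Set Implicit Arguments. Unset Strict Implicit. Unset Printing Implicit Defensive.

Inductive btree : Type :=
| Leaf of nat
| Node of btree & btree.

Fixpoint leaves (t : btree) : seq nat :=
  match t with
  | Leaf k => [:: k]
  | Node l r => leaves l ++ leaves r
  end.

(* kappa_T(v): number of leaves descending from the node v (the subtree). *)
Definition kappa (t : btree) : nat := size (leaves t).

Definition is_phylo (n : nat) (t : btree) : Prop :=
  perm_eq (leaves t) (iota 1 n).

Fixpoint lca_depth (t : btree) (i j : nat) : nat :=
  match t with
  | Leaf _ => 0
  | Node l r =>
      if (i \in leaves l) && (j \in leaves l) then (lca_depth l i j).+1
      else if (i \in leaves r) && (j \in leaves r) then (lca_depth r i j).+1
      else 0
  end.

Definition Phi (n : nat) (t : btree) : nat :=
  \sum_(1 <= j < n.+1) \sum_(1 <= i < j) lca_depth t i j.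

Fixpoint max_balanced (t : btree) : bool :=
  match t with
  | Leaf _ => true
  | Node l r =>
      [&& kappa l <= (kappa r).+1, kappa r <= (kappa l).+1,
          max_balanced l & max_balanced r]
  end.

(* Main.v *)
Require Import Defs.
From mathcomp Require Import all_boot zify.

Fixpoint Df (f k : nat) : nat :=
  match f with 0 => 0 | f'.+1 => k %/ 2 + Df f' (k %/ 2) end.
Definition D k := Df k k.

Lemma Df0 f : Df f 0 = 0.
Proof. by elim: f => //= f ->; rewrite div0n. Qed.

Lemma Df_stable f1 f2 k : k <= f1 -> k <= f2 -> Df f1 k = Df f2 k.
Proof.
elim: f1 f2 k => [|f1 IH] f2 k h1 h2.
  have -> : k = 0 by lia. by rewrite !Df0.
case: f2 h2 => [|f2] h2.
  have -> : k = 0 by lia. by rewrite !Df0.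
case: k h1 h2 => [|k] h1 h2; first by rewrite !Df0.
by rewrite /= (IH f2) //; lia.
Qed.

Lemma D_unfold k : D k = k %/ 2 + D (k %/ 2).
Proof.
rewrite /D; case: k => [|k] /=; first by rewrite div0n.
by rewrite (Df_stable (k.+1 %/ 2) k) //; lia.
Qed.

Lemma D_mono m n : m <= n -> D m <= D n.
Proof.
elim: n {-2}n (leqnn n) m => [|N IH] n hn m hmn.
  have -> : m = 0 by lia. by have -> : n = 0 by lia.
rewrite (D_unfold m) (D_unfold n).
case: n hn hmn => [|n] hn hmn.
  have -> : m = 0 by lia. by [].
have := IH (n.+1 %/ 2) ltac:(lia) (m %/ 2) ltac:(lia). lia.
Qed.

Definition E k := k + D k.
Definition h n := \sum_(k < n) E k.
Definition g n := \sum_(k < n) D k.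
Definition c k := 'C(k, 2).

Lemma hS n : h n.+1 = h n + E n.
Proof. by rewrite /h big_ord_recr. Qed.
Lemma gS n : g n.+1 = g n + D n.
Proof. by rewrite /g big_ord_recr. Qed.

Lemma h_cg n : h n = c n + g n.
Proof.
elim: n => [|n IH]; first by rewrite /h /g /c !big_ord0.
rewrite hS gS IH /c binS bin1 /E. lia.
Qed.

Lemma g_even m : g (m.*2) = (h m).*2 /\ g (m.*2.+1) = h m + h m.+1.
Proof.
elim: m => [|m [IH1 IH2]].
  split; first by rewrite /g /h !big_ord0.
  by rewrite gS hS /g /h !big_ord0 /E /D.
have e1 : D (m.+1.*2) = m.+1 + D m.+1 by rewrite D_unfold; congr (_ + D _); lia.
have e2 : D (m.+1.*2.+1) = m.+1 + D m.+1 by rewrite D_unfold; congr (_ + D _); lia.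
have e3 : D (m.*2.+1) = m + D m by rewrite D_unfold; congr (_ + D _); lia.
split.
- rewrite doubleS gS IH2 e3 (hS m) /E. lia.
- rewrite gS e1 doubleS gS IH2 e3 (hS m.+1) (hS m) /E. lia.
Qed.

Lemma g_rec n : g n = h (n %/ 2) + h (n.+1 %/ 2).
Proof.
have [m [-> | ->]] : exists m, n = m.*2 \/ n = m.*2.+1 by exists (n %/ 2); lia.
- have -> : m.*2 %/ 2 = m by lia. have -> : m.*2.+1 %/ 2 = m by lia.
  case: (g_even m) => -> _; lia.
- have -> : m.*2.+1 %/ 2 = m by lia. have -> : m.*2.+2 %/ 2 = m.+1 by lia.
  by case: (g_even m).
Qed.

Lemma E_incr a b : a < b -> E a < E b.
Proof. move=> ab; have := @D_mono a b (ltnW ab); rewrite /E; lia. Qed.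

Lemma h_conv_aux d a b : b - a = d -> a <= b ->
  h (a + b) %/ 2 = 0 -> True.
Proof. by []. Qed.

Lemma h_conv d : forall a b, a <= b -> b - a <= d ->
  h (a + b) = h (a + b) ->
  h ((a + b) %/ 2) + h ((a + b).+1 %/ 2) + (a.+1 < b) <= h a + h b.
Proof.
elim: d => [|d IH] a b ab hd _.
  have -> : b = a by lia. have -> : (a + a) %/ 2 = a by lia.
  have -> : (a + a).+1 %/ 2 = a by lia. have -> : (a.+1 < a) = false by lia. lia.
case: (ltnP a.+1 b) => hab; last first.
  case: (b =P a) => [->|ne].
    have -> : (a + a) %/ 2 = a by lia. have -> : (a + a).+1 %/ 2 = a by lia. lia.
  have -> : b = a.+1 by lia. have -> : (a + a.+1) %/ 2 = a by lia.
  have -> : (a + a.+1).+1 %/ 2 = a.+1 by lia. lia.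
case: b hab ab hd => [|b] hab ab hd; first lia.
have := IH a.+1 b ltac:(lia) ltac:(lia) erefl.
have -> : a.+1 + b = a + b.+1 by lia.
rewrite !hS. have := @E_incr a b ltac:(lia). lia.
Qed.

Lemma h_convex a b :
  h ((a + b) %/ 2) + h ((a + b).+1 %/ 2) + ((a.+1 < b) || (b.+1 < a)) <= h a + h b.
Proof.
case: (leqP a b) => ab.
  have := h_conv (b - a) a b ab (leqnn _) erefl. have -> : (b.+1 < a) = false by lia.
  by rewrite orbF.
have := h_conv (a - b) b a (ltnW ab) (leqnn _) erefl. rewrite (addnC b a).
have -> : (a.+1 < b) = false by lia. lia.
Qed.

Fixpoint F (t : btree) : nat :=
  match t with Leaf _ => 0 | Node l r => c (kappa l) + F l + c (kappa r) + F r end.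

Lemma c_sq a : (c a).*2 + a = a * a.
Proof. elim: a => [|a IH]; first by []. rewrite /c binS bin1 -/(c a). lia. Qed.

Lemma lca_sym t i j : lca_depth t i j = lca_depth t j i.
Proof.
elim: t => [k|l IHl r IHr] //=.
by rewrite IHl IHr (andbC (j \in leaves l)) (andbC (j \in leaves r)).
Qed.

Definition A t := \sum_(i <- leaves t) \sum_(j <- leaves t) lca_depth t i j.
Definition B t := \sum_(i <- leaves t) lca_depth t i i.

Lemma sum_const_seq (s : seq nat) a : \sum_(i <- s) a = a * size s.
Proof. by rewrite big_const_seq count_predT iter_addn_0. Qed.

Lemma AB t : uniq (leaves t) -> A t = (F t).*2 + B t.
Proof.
elim: t => [k|l IHl r IHr] /=.
  by rewrite /A /B /= !big_seq1.
rewrite cat_uniq => /and3P [ul dis ur].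
have nlr : forall x, x \in leaves r -> x \notin leaves l.
  by move=> x xr; apply/negP => xl; move/hasP: dis; apply; exists x.
rewrite /A /B. change (leaves (Node l r)) with (leaves l ++ leaves r).
rewrite !big_cat.
have e1 : \sum_(i <- leaves l) \sum_(j <- leaves l ++ leaves r) lca_depth (Node l r) i j
    = A l + kappa l * kappa l.
  rewrite (eq_bigr (fun i => \sum_(j <- leaves l) lca_depth (Node l r) i j +
     \sum_(j <- leaves r) lca_depth (Node l r) i j)); last by move=> i _; rewrite big_cat.
  rewrite (@eq_big_seq _ _ _ _ (leaves l) _ (fun i => \sum_(j <- leaves l) lca_depth l i j + kappa l)).
    by rewrite big_split /= sum_const_seq.
  move=> i il /=.
  rewrite (@eq_big_seq _ _ _ _ (leaves r) _ (fun j => 0)).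
    rewrite big1_eq addn0 /kappa -sum1_size -big_split /=.
    apply: eq_big_seq => j jl /=. by rewrite il jl /= addn1.
  move=> j jr /=. have il' : i \notin leaves r by apply/negP => ir; move: (nlr i ir); rewrite il.
  by rewrite (negbTE (nlr j jr)) (negbTE il') !andbF.
have e2 : \sum_(i <- leaves r) \sum_(j <- leaves l ++ leaves r) lca_depth (Node l r) i j
    = A r + kappa r * kappa r.
  rewrite (eq_bigr (fun i => \sum_(j <- leaves l) lca_depth (Node l r) i j +
     \sum_(j <- leaves r) lca_depth (Node l r) i j)); last by move=> i _; rewrite big_cat.
  rewrite (@eq_big_seq _ _ _ _ (leaves r) _ (fun i => \sum_(j <- leaves r) lca_depth r i j + kappa r)).
    by rewrite big_split /= sum_const_seq.
  move=> i ir /=.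
  rewrite (@eq_big_seq _ _ _ _ (leaves l) _ (fun j => 0)).
    rewrite big1_eq add0n /kappa -sum1_size -big_split /=.
    apply: eq_big_seq => j jr /=. by rewrite (negbTE (nlr i ir)) ir jr /= addn1.
  move=> j jl /=. have jr : j \notin leaves r by apply/negP => jr; move: (nlr j jr); rewrite jl.
  by rewrite (negbTE (nlr i ir)) (negbTE jr) andbF.
rewrite e1 e2.
have e3 : \sum_(i <- leaves l) lca_depth (Node l r) i i = B l + kappa l.
  rewrite (eq_big_seq (fun i => lca_depth l i i + 1)).
    by rewrite big_split /= sum1_size.
  by move=> i il /=; rewrite il addn1.
have e4 : \sum_(i <- leaves r) lca_depth (Node l r) i i = B r + kappa r.
  rewrite (eq_big_seq (fun i => lca_depth r i i + 1)).
    by rewrite big_split /= sum1_size.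
  by move=> i ir /=; rewrite (negbTE (nlr i ir)) ir addn1.
rewrite e3 e4 -/(A l) -/(A r) -/(B l) -/(B r) (IHl ul) (IHr ur).
have := c_sq (kappa l); have := c_sq (kappa r). rewrite /=. lia.
Qed.

Lemma full_diag (f : nat -> nat -> nat) n : (forall i j, f i j = f j i) ->
  \sum_(1 <= j < n.+1) \sum_(1 <= i < n.+1) f i j =
  (\sum_(1 <= j < n.+1) \sum_(1 <= i < j) f i j).*2 + \sum_(1 <= j < n.+1) f j j.
Proof.
move=> fs; elim: n => [|n IH]; first by rewrite !big_geq.
rewrite (big_nat_recr n.+1) //= (big_nat_recr n.+1 _ (fun j => \sum_(1 <= i < j) f i j)) //=.
rewrite (big_nat_recr n.+1 _ (fun j => f j j)) //=.
have -> : \sum_(1 <= i < n.+1) f i (n.+1) = \sum_(1 <= i < n.+1) f (n.+1) i.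
  by apply: eq_bigr => i _; rewrite fs.
rewrite (eq_bigr (fun j => \sum_(1 <= i < n.+1) f i j + f n.+1 j)); last first.
  by move=> j _; rewrite big_nat_recr.
rewrite big_split /= IH (big_nat_recr n.+1) //=.
have -> : \sum_(1 <= i < n.+1) f i (n.+1) = \sum_(1 <= i < n.+1) f (n.+1) i.
  by apply: eq_bigr => i _; rewrite fs.
lia.
Qed.

Lemma Phi_F n t : is_phylo n t -> Phi n t = F t.
Proof.
move=> ph.
have u : uniq (leaves t) by rewrite (perm_uniq ph) iota_uniq.
have := @AB t u. rewrite /A /B.
have := @full_diag (lca_depth t) n (lca_sym t).
rewrite /Phi /index_iota subn1 /=.
have P1 : forall G : nat -> nat, \sum_(i <- iota 1 n) G i = \sum_(i <- leaves t) G i.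
  by move=> G; rewrite (perm_big _ ph).
rewrite !P1. under eq_bigr => j _ do rewrite P1.
rewrite exchange_big /=; lia.
Qed.

Lemma kappa_pos t : 0 < kappa t.
Proof. rewrite /kappa; elim: t => //= l IHl r IHr; rewrite size_cat; lia. Qed.

Lemma F_lower t : g (kappa t) + ~~ max_balanced t <= F t /\
                  (max_balanced t -> F t = g (kappa t)).
Proof.
elim: t => [k|l [IHl1 IHl2] r [IHr1 IHr2]].
  by rewrite /g /kappa /= big_ord_recr big_ord0 /D.
have kN : kappa (Node l r) = kappa l + kappa r by rewrite /kappa /= size_cat.
rewrite kN /= g_rec.
have hc := h_convex (kappa l) (kappa r).
have hl := h_cg (kappa l). have hr := h_cg (kappa r).
have eb : ((kappa l).+1 < kappa r) || ((kappa r).+1 < kappa l) =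
   ~~ ((kappa l <= (kappa r).+1) && (kappa r <= (kappa l).+1)).
  by case: (leqP (kappa l) (kappa r).+1); case: (leqP (kappa r) (kappa l).+1) => /=; lia.
rewrite eb in hc.
split.
  move: hc.
  case: (max_balanced l) IHl1 IHl2; case: (max_balanced r) IHr1 IHr2;
  case: (kappa l <= (kappa r).+1); case: (kappa r <= (kappa l).+1) => /=; lia.
move=> /and4P [b1 b2 ml mr].
rewrite (IHl2 ml) (IHr2 mr).
have [e1 e2] : (kappa l + kappa r) %/ 2 + (kappa l + kappa r).+1 %/ 2 = kappa l + kappa r /\
  ((kappa l + kappa r) %/ 2 = kappa l \/ (kappa l + kappa r) %/ 2 = kappa r) by lia.
case: e2 => e2.
  have -> : (kappa l + kappa r).+1 %/ 2 = kappa r by lia. rewrite e2. lia.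
have -> : (kappa l + kappa r).+1 %/ 2 = kappa l by lia. rewrite e2. lia.
Qed.

Fixpoint bld (f : nat) (s : seq nat) : btree :=
  match f with
  | 0 => Leaf (head 0 s)
  | f'.+1 => if size s <= 1 then Leaf (head 0 s)
             else Node (bld f' (take (size s %/ 2) s)) (bld f' (drop (size s %/ 2) s))
  end.

Lemma bld_ok f s : 0 < size s -> size s <= f.+1 ->
  leaves (bld f s) = s /\ max_balanced (bld f s).
Proof.
elim: f s => [|f IH] s s0 sf.
  by case: s s0 sf => [|x [|y s]] //=.
rewrite /=; case: ifP => s1.
  by case: s s0 s1 sf => [|x [|y s]] //=.
have st : size (take (size s %/ 2) s) = size s %/ 2 by rewrite size_takel //; lia.
have sd : size (drop (size s %/ 2) s) = size s - size s %/ 2 by rewrite size_drop.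
have [h1 h2] := IH (take (size s %/ 2) s) ltac:(lia) ltac:(lia).
have [h3 h4] := IH (drop (size s %/ 2) s) ltac:(lia) ltac:(lia).
rewrite /= h1 h3 cat_take_drop; split => //.
rewrite /kappa h1 h3 st sd h2 h4 !andbT. apply/andP; split; lia.
Qed.

Theorem mainTheorem10 (n : nat) (T : btree) :
  is_phylo n T ->
  ((forall T' : btree, is_phylo n T' -> Phi n T <= Phi n T') <->
   max_balanced T).
Proof.
move=> ph.
have kn : forall t, is_phylo n t -> kappa t = n.
  by move=> t pt; rewrite /kappa (perm_size pt) size_iota.
have n0 : 0 < n by rewrite -(kn T ph) kappa_pos.
rewrite (@Phi_F n T ph). split.
- move=> hmin.
  have [lb mb] := @bld_ok n (iota 1 n) ltac:(rewrite size_iota; lia)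
     ltac:(rewrite size_iota; lia).
  have pb : is_phylo n (bld n (iota 1 n)) by rewrite /is_phylo lb.
  have := hmin _ pb. rewrite (@Phi_F n _ pb).
  have [_ e] := F_lower (bld n (iota 1 n)). rewrite (e mb) (kn _ pb).
  have [l _] := F_lower T. rewrite (kn _ ph) in l.
  case: (max_balanced T) l => //=; lia.
- move=> mb T' ph'. rewrite (@Phi_F n _ ph').
  have [_ e] := F_lower T. rewrite (e mb) (kn _ ph).
  have [l _] := F_lower T'. rewrite (kn _ ph') in l. lia.
Qed.
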